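(* Let $G$ be a graph with integer parameters $\nabla_0\ge\nabla_0(G)$ and $\nabla>\nabla_1^B(G)$, and let $\kappa=\max\{2\nabla_0,2\nabla\}$, $\lambda=1/\kappa$, $\mu=2\kappa^2$, $\nu=2\kappa^3$. For every $W\subseteq V(G)$ with $|W|\ge\mu$, the number of pseudo-covers of $W$ (with parameters $\kappa,\lambda,\mu,\nu$) is less than $\kappa^{2\kappa}$.
   Context: Graphs are finite, undirected and simple; $N[v]$ is the closed neighbourhood of $v$. $\nabla_0(G)=\max\{|E(H)|/|V(H)|: H\subseteq G\}$. A $1$-shallow minor of $G$ is a graph obtained from $G$ by deleting vertices and edges and contracting pairwise vertex-disjoint connected subgraphs of radius at most $1$; $\nabla_1^B(G)$ is the maximum edge density of a bipartite $1$-shallow minor of $G$. A vertex $z$ is $\lambda$-strong for a set $W'$ if $|N[z]\cap W'|\ge\lambda|W'|$. A pseudo-cover of $W$ with parameters $\kappa,\lambda,\mu,\nu$ is a sequence $(v_1,\ldots,v_m)$ of vertices such that $m\le\kappa$; for every $i\le m$, $v_i$ is $\lambda$-strong for $W\setminus\bigcup_{j<i}N[v_j]$ and $|N[v_i]\cap(W\setminus\bigcup_{j<i}N[v_j])|\ge\mu$; and $|W\setminus\bigcup_{j\le m}N[v_j]|\le\nu$. *)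

(* Defs.v *)
From HB Require Import structures.
From mathcomp Require Import all_boot all_order all_algebra.
Set Implicit Arguments. Unset Strict Implicit. Unset Printing Implicit Defensive.
Import Order.TTheory GRing.Theory Num.Theory.

Section Graphs.
Variables (T : finType) (e : rel T).

Definition simple_graph := symmetric e /\ irreflexive e.

Definition cnbh (v : T) : {set T} := [set u | (u == v) || e v u].

Definition edges : {set {set T}} := [set [set x; y] | x in T, y in T & e x y].

Definition is_subgraph (S : {set T}) (F : {set {set T}}) : Prop :=
  F \subset edges /\ (forall f, f \in F -> f \subset S).

(* "nabla0 >= nabla_0(G)" : every (nonempty) subgraph has edge density <= nabla0 *)
Definition nabla0_bound (nabla0 : nat) : Prop :=
  forall S F, is_subgraph S F -> (0 < #|S|)%N ->
    ((#|F|%:R / #|S|%:R : rat) <= nabla0%:R)%R.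

(* Branch sets B : 'I_k -> {set T} of a 1-shallow minor: nonempty, pairwise
   disjoint, each spanning a connected subgraph of radius <= 1 (i.e. with a
   centre adjacent to all its other vertices). *)
Definition shallow1_branch_sets (k : nat) (B : 'I_k -> {set T}) : Prop :=
  (forall i j, i != j -> [disjoint B i & B j]) /\
  (forall i, exists2 c, c \in B i & forall x, x \in B i -> (x == c) || e c x).

Definition is_shallow1_minor (k : nat) (B : 'I_k -> {set T})
    (F : {set {set 'I_k}}) : Prop :=
  shallow1_branch_sets B /\
  (forall f, f \in F -> exists i j, [/\ f = [set i; j], i != j &
       exists x y, [/\ x \in B i, y \in B j & e x y]]).

Definition bipartite (k : nat) (F : {set {set 'I_k}}) : Prop :=
  exists col : 'I_k -> bool, forall i j, [set i; j] \in F -> col i != col j.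

(* "nabla > nabla_1^B(G)" : every bipartite 1-shallow minor has density < nabla *)
Definition nabla1B_strict_bound (nabla : nat) : Prop :=
  forall k (B : 'I_k -> {set T}) (F : {set {set 'I_k}}),
    is_shallow1_minor B F -> bipartite F -> (0 < k)%N ->
    ((#|F|%:R / k%:R : rat) < nabla%:R)%R.

Definition lstrong (lam : rat) (z : T) (W' : {set T}) : bool :=
  (lam * #|W'|%:R <= #|cnbh z :&: W'|%:R)%R.

(* the per-step conditions of a pseudo-cover, R = currently uncovered part of W *)
Fixpoint pc_steps (lam : rat) (mu : nat) (R : {set T}) (s : seq T) : bool :=
  if s is v :: s' then
    [&& lstrong lam v R, (mu <= #|cnbh v :&: R|)%N & pc_steps lam mu (R :\: cnbh v) s']
  else true.

Definition pseudo_cover (kappa : nat) (lam : rat) (mu nu : nat)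
    (W : {set T}) (s : seq T) : bool :=
  [&& (size s <= kappa)%N, pc_steps lam mu W s &
      (#|W :\: \bigcup_(v <- s) cnbh v| <= nu)%N].

(* number of pseudo-covers (they all have length <= kappa) *)
Definition num_pseudo_covers (kappa : nat) (lam : rat) (mu nu : nat)
    (W : {set T}) : nat :=
  \sum_(m < kappa.+1) #|[pred t : m.-tuple T | pseudo_cover kappa lam mu nu W t]|.

End Graphs.

(* Main.v *)
Require Import Defs.
From HB Require Import structures.
From mathcomp Require Import all_boot all_order all_algebra zify.
Import Order.TTheory GRing.Theory Num.Theory.
Set Implicit Arguments. Unset Strict Implicit.

Lemma card_dep_pairs (U V : finType) (A : {set U}) (Q : U -> V -> bool) :
  #|[set p : U * V | (p.1 \in A) && Q p.1 p.2]| = \sum_(x in A) #|[set y | Q x y]|.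
Proof.
transitivity (\sum_(x in A) \sum_(y | Q x y) 1).
  rewrite pair_big_dep -sum1_card; apply: eq_bigl => p; by rewrite !inE.
by apply: eq_bigr => x _; rewrite sum1_card cardsE.
Qed.

Section Count.
Variables (T : finType) (e : rel T) (lam : rat) (mu K : nat).
Definition Zs (R : {set T}) := [set v | lstrong e lam v R && (mu <= #|cnbh e v :&: R|)].
Hypothesis HZ : forall R, #|Zs R| <= K.

Lemma count_pc m : forall R, #|[set t : m.-tuple T | pc_steps e lam mu R t]| <= K ^ m.
Proof.
elim: m => [|m IH] R.
  rewrite expn0; apply: leq_trans (subset_leq_card (subsetT _)) _.
  by rewrite cardsT card_tuple expn0.
set A := [set t : m.+1.-tuple T | _].
pose h := fun t : m.+1.-tuple T => (thead t, [tuple of behead t] : m.-tuple T).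
pose S := [set p : T * m.-tuple T | (p.1 \in Zs R) && pc_steps e lam mu (R :\: cnbh e p.1) p.2].
have hinj : injective h.
  move=> t t' [] E1 E2; rewrite (tuple_eta t) (tuple_eta t'); apply: val_inj => /=.
  by rewrite E1 E2.
rewrite -(card_imset _ hinj).
have sub : h @: A \subset S.
  apply/subsetP => p /imsetP [t]; rewrite inE => Ht ->.
  rewrite inE /=; move: Ht; rewrite [in pc_steps _ _ _ _ t](tuple_eta t) /= => /and3P [H1 H2 H3].
  by rewrite inE H1 H2 H3.
apply: leq_trans (subset_leq_card sub) _.
rewrite /S (card_dep_pairs (Zs R) (fun x (t : m.-tuple T) => pc_steps e lam mu (R :\: cnbh e x) t)).
apply: (@leq_trans (\sum_(x in Zs R) K ^ m)); first by apply: leq_sum => x _; exact: IH.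
by rewrite sum_nat_const expnS leq_mul2r HZ orbT.
Qed.
End Count.
Lemma set2_inv (U : finType) (a b c d : U) :
  [set a; b] = [set c; d] -> (a = c /\ b = d) \/ (a = d /\ b = c).
Proof.
move=> E.
have ha : a \in [set c; d] by rewrite -E set21.
have hb : b \in [set c; d] by rewrite -E set22.
have hc : c \in [set a; b] by rewrite E set21.
have hd : d \in [set a; b] by rewrite E set22.
move: ha hb hc hd; rewrite !inE.
case/orP=> /eqP ha; case/orP=> /eqP hb; subst => /=; rewrite ?eqxx ?orbT //=.
all: try by [left|right].
- by move=> _ /orP[] /eqP ->; left.
- by move=> /orP[] /eqP -> _; left.
Qed.

Lemma nbh_split (T : finType) (e : rel T) (Z R : {set T}) z :
  cnbh e z :&: R \subset [set z] :|: ([set y | (y \in Z) && e z y] :|: [set y | (y \in R :\: Z) && e z y]).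
Proof.
apply/subsetP => y; rewrite !inE => /andP [/orP [->//|ezy] yR].
by rewrite ezy yR !andbT; case: (y \in Z); rewrite ?orbT.
Qed.

Section Main.
Variables (T : finType) (e : rel T) (nabla0 nabla kappa : nat).
Hypothesis H0 : nabla0_bound e nabla0.
Hypothesis H1 : nabla1B_strict_bound e nabla.
Hypothesis Hk0 : 2 * nabla0 <= kappa.
Hypothesis Hk1 : 2 * nabla <= kappa.
Hypothesis Hk2 : 2 <= kappa.

Lemma Zbound R : #|Zs e (1 / kappa%:R)%R (2 * kappa ^ 2) R| < kappa ^ 2.
Proof.
set Z := Zs _ _ _ R.
have [n0|npos] := posnP #|Z|; first by rewrite n0 expn_gt0; lia.
case/card_gt0P: (npos) => z0 z0Z.
set n := #|Z|.
set r := #|R|.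
pose P := [set p : T * T | (p.1 \in Z) && ((p.2 \in Z) && e p.1 p.2)].
pose Q := [set p : T * T | (p.1 \in Z) && ((p.2 \in R :\: Z) && e p.1 p.2)].
have Hsum : \sum_(z in Z) #|cnbh e z :&: R| <= n + #|P| + #|Q|.
  rewrite /P /Q (card_dep_pairs Z (fun x y => (y \in Z) && e x y))
    (card_dep_pairs Z (fun x y => (y \in R :\: Z) && e x y)).
  rewrite /n -sum1_card -!big_split /=.
  apply: leq_sum => z zZ.
  set A := [set y | (y \in Z) && e z y].
  set B := [set y | (y \in R :\: Z) && e z y].
  have sub : cnbh e z :&: R \subset [set z] :|: (A :|: B).
    exact: nbh_split.
  apply: leq_trans (subset_leq_card sub) _.
  rewrite cardsU cards1 -addnA; apply: leq_trans (leq_subr _ _) _.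
  by rewrite leq_add2l cardsU leq_subr.
have Hlo : n * (r + 2 * kappa ^ 3) <= 2 * kappa * \sum_(z in Z) #|cnbh e z :&: R|.
  rewrite /n -sum_nat_const big_distrr /=.
  apply: leq_sum => z; rewrite inE => /andP [Hs Hm].
  move: Hs; rewrite /lstrong mul1r mulrC ler_pdivrMr ?ltr0n; last by lia.
  rewrite -natrM ler_nat => Hs.
  nia.
pose F0 := (fun p : T * T => [set p.1; p.2]) @: P.
have HF0 : #|F0| <= nabla0 * n.
  have Hsg : is_subgraph e Z F0.
    split.
      apply/subsetP => f /imsetP [p]; rewrite in_set => /and3P [_ _ ep] ->.
      by apply/imset2P; exists p.1 p.2; rewrite ?inE.
    move=> f /imsetP [p]; rewrite in_set => /and3P [p1 p2 _] ->.
    by apply/subsetP => y; rewrite !in_set2 => /orP [] /eqP ->.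
  have := H0 Hsg npos.
  by rewrite ler_pdivrMr ?ltr0n // -natrM ler_nat.
have HP : #|P| <= 2 * #|F0|.
  pose g := fun p : T * T => ([set p.1; p.2], (enum_rank p.1 < enum_rank p.2)%N).
  have ginj : {in P &, injective g}.
    move=> [a b] [c d] _ _ [] /set2_inv [[-> ->]//|[Ead Ebc]] /=.
    subst; move=> H.
    have : enum_rank d = enum_rank c.
      by move: H; case: (ltngtP (enum_rank d) (enum_rank c)) => // E _; apply: ord_inj.
    by move/enum_rank_inj ->.
  rewrite -(card_in_imset ginj).
  have : g @: P \subset setX F0 [set: bool].
    apply/subsetP => x /imsetP [p pP ->]; rewrite inE /= in_setT andbT.
    by apply/imsetP; exists p.
  move/subset_leq_card; rewrite cardsX cardsT card_bool mulnC //.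
pose S := Z :|: R.
have z0S : z0 \in S by rewrite inE z0Z.
pose rk := enum_rank_in z0S.
have rkK : {in S, cancel rk enum_val} := enum_rankK_in z0S.
pose F1 := (fun p : T * T => [set rk p.1; rk p.2]) @: Q.
have inQ : forall p, p \in Q -> [/\ p.1 \in Z, p.2 \in R, p.2 \notin Z & e p.1 p.2].
  by move=> p; rewrite in_set in_setD => /and3P [-> /andP [-> ->] ->].
have inS1 : forall p, p \in Q -> p.1 \in S by move=> p /inQ [? ? ? ?]; rewrite inE; apply/orP; left.
have inS2 : forall p, p \in Q -> p.2 \in S by move=> p /inQ [? ? ? ?]; rewrite inE; apply/orP; right.
have HQ : #|Q| = #|F1|.
  rewrite card_in_imset //.
  move=> p p' pQ p'Q /set2_inv [[E1 E2]|[E1 E2]].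
    move: (f_equal enum_val E1) (f_equal enum_val E2).
    rewrite !rkK ?inS1 ?inS2 //; case: p {pQ E1 E2} => ? ?; case: p' {p'Q} => ? ? /= -> -> //.
  have := f_equal enum_val E1; rewrite !rkK ?inS1 ?inS2 // => E.
  by case/inQ: pQ => pZ _ _ _; case/inQ: p'Q => _ _ /negP []; rewrite -E.
have HF1 : #|F1| < nabla * #|S|.
  have kpos : 0 < #|S| by apply/card_gt0P; exists z0.
  have Hm : is_shallow1_minor e (fun i : 'I_#|S| => [set enum_val i]) F1.
    split; first split.
    - move=> i j ij; rewrite disjoints1 inE; apply/negP => /eqP /enum_val_inj E.
      by rewrite E eqxx in ij.
    - by move=> i; exists (enum_val i); rewrite ?inE // => x; rewrite inE => ->.
    - move=> f /imsetP [p pQ ->]; exists (rk p.1), (rk p.2); split => //.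
        apply/negP => /eqP /(f_equal enum_val); rewrite !rkK ?inS1 ?inS2 // => E.
        by case/inQ: pQ => pZ _ /negP []; rewrite -E.
      exists p.1, p.2; rewrite !inE !rkK ?inS1 ?inS2 ?eqxx //.
      by case/inQ: pQ.
  have Hb : bipartite F1.
    exists (fun i => enum_val i \in Z) => i j /imsetP [p pQ /set2_inv [[-> ->]|[-> ->]]];
      rewrite !rkK ?inS1 ?inS2 //; case/inQ: pQ => -> _ /negbTE -> _ //.
  have := H1 Hm Hb kpos.
  by rewrite ltr_pdivrMr ?ltr0n // -natrM ltr_nat.
have HS : #|S| <= n + r by rewrite cardsU leq_subr.
rewrite HQ in Hsum.
move: Hsum Hlo HF0 HP HF1 HS.
set Sd := \sum_(z in Z) _.
set A := #|P|. set B := #|F1|. set F := #|F0|. set k := #|S|.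
move=> Hsum Hlo HF0 HP HF1 HS.
rewrite ltnNge; apply/negP => Hn.
have HA : A <= kappa * n by nia.
have HB : 2 * B < kappa * (n + r) by nia.
have H3 : n * r + 2 * kappa ^ 3 * n < 2 * kappa * n + 3 * kappa ^ 2 * n + kappa ^ 2 * r by nia.
have H4 : kappa ^ 2 * r <= n * r by nia.
have H5 : 2 * kappa + 3 * kappa ^ 2 <= 2 * kappa ^ 3 by nia.
nia.
Qed.
End Main.
Lemma exp_mono K n : K ^ n <= K.+1 ^ n.
Proof. by elim: n => // n IH; rewrite !expnS leq_mul. Qed.

Lemma geom_le K n : \sum_(m < n.+1) K ^ m <= K.+1 ^ n.
Proof.
elim: n => [|n IH]; first by rewrite big_ord_recr big_ord0.
rewrite big_ord_recr /= [K.+1 ^ n.+1]expnS mulSn expnS leq_add //.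
by rewrite leq_mul2l exp_mono orbT.
Qed.

Lemma geom_lt K n : 0 < K -> \sum_(m < n.+3) K ^ m < K.+1 ^ n.+2.
Proof.
move=> K0.
rewrite big_ord_recr /= [K.+1 ^ n.+2]expnS mulSn [K ^ n.+2]expnS.
rewrite -addnS; apply: leq_add; first exact: geom_le.
by rewrite ltn_mul2l K0 /= ltn_exp2r.
Qed.

Unset Implicit Arguments.
Set Strict Implicit.

Theorem lemma7 (T : finType) (e : rel T) (nabla0 nabla : nat) :
  simple_graph e ->
  (0 < nabla)%N ->
  nabla0_bound e nabla0 ->
  nabla1B_strict_bound e nabla ->
  let kappa := maxn (2 * nabla0) (2 * nabla) in
  let lam : rat := (1 / kappa%:R)%R in
  let mu := 2 * kappa ^ 2 in
  let nu := 2 * kappa ^ 3 in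
  forall W : {set T}, (mu <= #|W|)%N ->
    (num_pseudo_covers e kappa lam mu nu W < kappa ^ (2 * kappa))%N.
Proof.
move=> _ npos H0 H1 kappa lam mu nu W _.
have Hk0 : 2 * nabla0 <= kappa by rewrite /kappa; lia.
have Hk1 : 2 * nabla <= kappa by rewrite /kappa; lia.
have Hk2 : 2 <= kappa by lia.
have HZ : forall R, #|Zs e lam mu R| <= (kappa ^ 2).-1.
  move=> R; have := Zbound H0 H1 Hk0 Hk1 Hk2 R; rewrite /lam /mu; lia.
have [k Ek] : exists k, kappa = k.+2 by exists (kappa - 2); lia.
have HK : ((kappa ^ 2).-1).+1 = kappa ^ 2 by rewrite prednK // expn_gt0; lia.
have Kpos : 0 < (kappa ^ 2).-1 by rewrite -ltnS HK; nia.
rewrite /num_pseudo_covers.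
apply: (@leq_ltn_trans (\sum_(m < kappa.+1) ((kappa ^ 2).-1) ^ m)).
  apply: leq_sum => m _.
  apply: leq_trans (count_pc HZ m W).
  apply: subset_leq_card; apply/subsetP => t; rewrite inE => /and3P [_ H _].
  exact H.
have E2 : kappa ^ (2 * kappa) = (kappa ^ 2) ^ kappa by rewrite -expnM mulnC.
rewrite E2 -HK Ek; exact: geom_lt.
Qed.
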